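(* Let $B=F(b_1,\ldots,b_n)$ be a Ferrers board with $0\le b_1\le\cdots\le b_n$ and $b_n>0$, and let $B^-=F(b_1,\ldots,b_{n-1})$. Then for all $1\le k\le n$, $$\mathbf{rPT}_k(B,p,q,r)=\mathbf{rPT}_k(B^-,p,q,r)+P_{b_{n-(k-1)}}(p,q,r)\,\mathbf{rPT}_{k-1}(B^-,p,q,r).$$
   Context: For $m\ge1$, a $P$-tiling of height $m$ is a tiling of a column of height $m$ by tiles of heights 1, 2 and 3 whose bottom-most tile has height 1. $P_m(p,q,r)=\sum_T q^{\mathrm{one}(T)}p^{\mathrm{two}(T)}r^{\mathrm{three}(T)}$ over all $P$-tilings $T$ of height $m$, where $\mathrm{one},\mathrm{two},\mathrm{three}$ count tiles of height 1, 2, 3. There are no $P$-tilings of height 0 and $P_0(p,q,r)=0$. A Ferrers board $F(b_1,\ldots,b_n)$ has column heights $b_1,\ldots,b_n$ from left to right. A $P$-rook placement of $k$ tilings in $B=F(b_1,\ldots,b_n)$ is a choice of columns $1\le i_1<\cdots<i_k\le n$ with, for each $s=1,\ldots,k$, a $P$-tiling of height $b_{i_s-(s-1)}$ in column $i_s$ (the number of cells of column $i_s$ left uncanceled by the tilings in earlier columns, each tiling canceling top cells of columns to its right so that after $s$ tilings the untiled columns have $b_1,\ldots,b_{n-s}$ uncanceled cells). Its weight is $q^ap^br^c$ with $a,b,c$ the total numbers of tiles of height 1, 2, 3 used. $\mathbf{rPT}_k(B,p,q,r)$ is the sum of the weights of all $P$-rook placements of $k$ tilings in $B$ (the empty placement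 has weight 1; the sum is 0 if there are none). *)

(* Defs.v *)
From mathcomp Require Import all_boot all_order all_algebra.
Set Implicit Arguments. Unset Strict Implicit. Unset Printing Implicit Defensive.
Import GRing.Theory.
Local Open Scope ring_scope.

(* A P-tiling of height m is encoded as the list of its tile heights, listed
   from bottom to top: every entry is 1, 2 or 3, the entries sum to m, and the
   bottom-most tile (head of the list) has height 1. *)
Definition is_Ptiling (m : nat) (t : seq nat) : bool :=
  [&& all (fun x => (1 <= x <= 3)%N) t, sumn t == m & head 0%N t == 1%N].

Section Weights.
Variable R : comRingType.
Variables p q r : R.

Definition tile_weight (h : nat) : R :=
  if h == 1%N then q else if h == 2%N then p else r.

Definition Ptiling_weight (t : seq nat) : R := \prod_(h <- t) tile_weight h.

(* P_m(p,q,r): sum of weights over all P-tilings of height m.  A tiling of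
   height m has at most m tiles; tiles are enumerated as tuples over 'I_3
   (value i encodes a tile of height i+1). *)
Definition Pm (m : nat) : R :=
  \sum_(l < m.+1) \sum_(t : l.-tuple 'I_3 | is_Ptiling m [seq (val i).+1 | i <- t])
     Ptiling_weight [seq (val i).+1 | i <- t].

(* rPT_k(F(b_1..b_n)): sum over column choices i_1 < ... < i_k (0-based
   columns c_0 < ... < c_{k-1} in 'I_n) of the total weight of the choice of a
   P-tiling of height b_{i_s-(s-1)} in each chosen column; summing the product
   of weights over the independent tiling choices gives the product of the
   corresponding P-polynomials. *)
Definition rPT (k : nat) (b : seq nat) : R :=
  \sum_(c : k.-tuple 'I_(size b) | sorted ltn [seq val i | i <- c])
     \prod_(s < k) Pm (nth 0%N b (val (tnth c s) - s)).
End Weights.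

(* Main.v *)
Require Import Defs.
From mathcomp Require Import all_boot all_order all_algebra.
Set Implicit Arguments. Unset Strict Implicit. Unset Printing Implicit Defensive.

Fixpoint SL (n k : nat) : seq (seq nat) :=
  match n with
  | 0 => if k is 0 then [:: [::]] else [::]
  | m.+1 => SL m k ++ (if k is k'.+1 then map (rcons^~ m) (SL m k') else [::])
  end.

Definition okS n k (s : seq nat) := [&& size s == k, all (fun x => x < n) s & pairwise ltn s].

Lemma mem_rcons_map (L : seq (seq nat)) s' x m :
  (rcons s' x \in map (rcons^~ m) L) = (x == m) && (s' \in L).
Proof.
apply/mapP/andP => [[t tL /eqP]|[/eqP -> sL]]; last by exists s'.
by rewrite eqseq_rcons => /andP[/eqP -> /eqP ->].
Qed.

Lemma memSL n k s : (s \in SL n k) = okS n k s.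
Proof.
rewrite /okS; elim: n k s => [|m IH] k s /=.
  by case: k => [|k]; case: s => //= *; rewrite andbF.
rewrite mem_cat IH; case: k => [|k].
  by case: s => //=; rewrite orbF.
case/lastP: s => [|s x] //=.
  by apply/mapP => -[t _] /(congr1 size); rewrite size_rcons.
rewrite mem_rcons_map IH size_rcons eqSS !all_rcons pairwise_rcons.
case: (ltngtP x m) => [xm|xm|->] /=.
- rewrite orbF ltnS ltnW //=; case Ax: (all (fun y => y < x) s); rewrite ?andbF //.
  rewrite (@sub_all _ (fun y => y < x) (fun y => y < m)) //.
    rewrite (@sub_all _ (fun y => y < x) (fun y => y < m.+1)) // => y /= yx.
    exact: ltn_trans yx (ltn_trans xm (ltnSn _)).
  move=> y /= yx; exact: ltn_trans yx xm.
- by rewrite andbF /= ltnS leqNgt xm /= andbF.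
- rewrite andbF ltnSn /=; case Am: (all (fun y => y < m) s); rewrite ?andbF //.
  by rewrite (@sub_all _ (fun y => y < m) (fun y => y < m.+1)) // => y /= /ltnW.
Qed.

Lemma uniqSL n k : uniq (SL n k).
Proof.
elim: n k => [|m IH] k /=; first by case: k.
rewrite cat_uniq IH /=; case: k => [|k] //=.
rewrite map_inj_uniq ?IH ?andbT; last exact: rcons_injl.
apply/hasPn => t /mapP[s' _ ->]; rewrite memSL /okS all_rcons ltnn /=.
by rewrite andbF.
Qed.

Lemma tupleS n k :
  perm_eq [seq s <- [seq map val (tval c) | c <- index_enum (k.-tuple 'I_n)] | pairwise ltn s]
    (SL n k).
Proof.
apply: uniq_perm.
- rewrite filter_uniq // map_inj_uniq ?index_enum_uniq //.
  by move=> c1 c2 /(inj_map val_inj) /val_inj.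
- exact: uniqSL.
move=> s; rewrite mem_filter memSL /okS andbC andbA; congr (_ && _).
apply/mapP/andP => [[c _ ->]|[/eqP sk a]].
  rewrite size_map size_tuple eqxx; split => //.
  by rewrite all_map; apply/allP => i _ /=.
have E : map val (pmap (insub : nat -> option 'I_n) s) = s.
  elim: s a {sk} => //= x s IHs /andP[xn a].
  by rewrite insubT /= IHs.
have sz : size (pmap (insub : nat -> option 'I_n) s) == k.
  by rewrite -(size_map val) E sk.
exists (Tuple sz); first by rewrite mem_index_enum.
by rewrite /= E.
Qed.

Import GRing.Theory.
Local Open Scope ring_scope.

Definition FF (R : comRingType) (p q r : R) (b : seq nat) k (s : seq nat) : R :=
  \prod_(i < k) Pm p q r (nth 0%N b (nth 0%N s i - i)).

Lemma rPT_SL (R : comRingType) (p q r : R) (b : seq nat) k :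
  rPT p q r k b = \sum_(s <- SL (size b) k) FF p q r b k s.
Proof.
rewrite /rPT.
rewrite (eq_bigr (fun c : k.-tuple 'I_(size b) => FF p q r b k (map val (tval c)))); last first.
  move=> c _; rewrite /FF; apply: eq_bigr => i _.
  by rewrite -(tnth_map val) (tnth_nth 0%N).
rewrite -(big_map (fun c : k.-tuple 'I_(size b) => map val (tval c)) (fun s => sorted ltn s)).
rewrite (eq_bigl (fun s => pairwise ltn s)); last by move=> s; rewrite sorted_pairwise //; exact: ltn_trans.
by rewrite -big_filter (perm_big _ (tupleS _ _)).
Qed.

Lemma FF_take (R : comRingType) (p q r : R) (b : seq nat) m k s :
  okS m k s -> FF p q r b k s = FF p q r (take m b) k s.
Proof.
case/and3P => /eqP sk a _; rewrite /FF; apply: eq_bigr => i _.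
rewrite nth_take //.
have : nth 0%N s i \in s by rewrite mem_nth // sk.
move/(allP a) => /= lt; exact: leq_ltn_trans (leq_subr _ _) lt.
Qed.

Theorem theorem7 (R : comRingType) (p q r : R) (b : seq nat) :
  sorted leq b -> (0 < last 0 b)%N ->
  forall k : nat, (1 <= k <= size b)%N ->
    rPT p q r k b =
      rPT p q r k (take (size b).-1 b)
      + Pm p q r (nth 0%N b (size b - k)) * rPT p q r k.-1 (take (size b).-1 b).
Proof.
move=> _ _ k /andP[k1 kn].
have [m Em] : exists m, size b = m.+1 by case: (size b) kn => [|m]; [case: k k1 | exists m].
case: k k1 kn => // k _ kn.
have szt : size (take m b) = m by rewrite size_take Em ltnSn.
rewrite !rPT_SL Em /= szt big_cat /= big_map subSS.
congr (_ + _).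
  by apply: eq_big_seq => s; rewrite memSL => /FF_take ->.
rewrite mulr_sumr; apply: eq_big_seq => s; rewrite memSL => sok.
rewrite /FF big_ord_recr /= nth_rcons.
move: (sok) => /and3P[/eqP sk _ _].
rewrite sk ltnn eqxx mulrC; congr (_ * _).
transitivity (FF p q r b k s); last exact: FF_take.
rewrite /FF; apply: eq_bigr => i _; by rewrite nth_rcons sk ltn_ord.
Qed.
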